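(* Let $G=\varinjlim(\mathbb Z^{n+1},A^{(n)})$ be the inductive limit (the $K_0$-group of the GICAR algebra), where $A^{(n)}:\mathbb Z^{n+1}\to\mathbb Z^{n+2}$ is given by $(A^{(n)}v)_i=v_{i-1}+v_i$ (with $v_0=v_{n+2}=0$), with positive cone $G^+$ the union of the images of $\mathbb Z_{\ge0}^{n+1}$ and order unit $u$ the image of $(\binom n0,\binom n1,\dots,\binom nn)\in\mathbb Z^{n+1}$ (for any $n$). Let $\mathbb Z^{(\infty)}$ be the group of integer sequences $(\beta_1,\beta_2,\dots)$ that are eventually $0$, with $\mathbb Z^{n+1}$ identified with the sequences supported in the first $n+1$ coordinates. Define $\Phi_n:\mathbb Z^{n+1}\to\mathbb Z^{(\infty)}$ by $\Phi_n(v)=A_nv$. Then: (a) $\Phi_{n+1}\circ A^{(n)}=\Phi_n$ for all $n\ge1$, and the induced map $G\to\mathbb Z^{(\infty)}$ is a group isomorphism; (b) it maps $u$ to $e_1=(1,0,0,\dots)$; (c) it maps $G^+$ onto $\bigcup_{n\ge1}P_n^+$, where $P_n^+$ is the set of $\beta\in\mathbb Z^{(\infty)}$ supported in the first $n+1$ coordinates such that $\sum_{l=0}^{k}\binom{n-l}{k-l}\beta_{l+1}\ge0$ for all $0\le k\le n$.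
   Context: For $k\ge0$, $A_{k,k+1}\in M_{k+2}(\mathbb Z)$ is the lower bidiagonal matrix with all diagonal entries $1$, all subdiagonal entries $(i+1,i)$ equal to $1$, and all other entries $0$; for $n\ge1$, $A_n=[A_{0,1}^{-1}\oplus I_{n-1}][A_{1,2}^{-1}\oplus I_{n-2}]\cdots[A_{n-2,n-1}^{-1}\oplus I_1]A_{n-1,n}^{-1}\in M_{n+1}(\mathbb Z)$, where $I_m$ is the $m\times m$ identity and $\oplus$ is block-diagonal sum. (In the paper $\mathbb Z^{(\infty)}$ appears as $C(X_{min},\mathbb Z)$, with $\beta$ corresponding to $\sum_r\beta_r\chi_{B(r,r-1)\cap X_{min}}$.) *)

(* Defs.v *)
From HB Require Import structures.
From mathcomp Require Import all_boot all_order all_algebra.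
Set Implicit Arguments. Unset Strict Implicit. Unset Printing Implicit Defensive.
Import Order.TTheory GRing.Theory Num.Theory.
Local Open Scope ring_scope.

(* Indexing convention: all vectors and sequences are 0-indexed, so the
   coordinate v_i (1-indexed in the paper) is [v (i-1)].  *)

Definition Aup (n : nat) : 'M[int]_(n.+2, n.+1) :=
  \matrix_(i, j) ((nat_of_ord i == nat_of_ord j) || (nat_of_ord i == (nat_of_ord j).+1))%:R.

Definition Akk (k : nat) : 'M[int]_(k.+2) :=
  \matrix_(i, j) ((nat_of_ord i == nat_of_ord j) || (nat_of_ord i == (nat_of_ord j).+1))%:R.

(* A_{k,k+1}^{-1} (+) I_{N-1-k}, an (N+1)x(N+1) matrix (block diagonal sum,
   written out entrywise). Used for k <= N-2. *)
Definition Dblk (N k : nat) : 'M[int]_(N.+1) :=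
  \matrix_(i, j)
    if (nat_of_ord i < k.+2)%N && (nat_of_ord j < k.+2)%N
    then (invmx (Akk k)) (inord i) (inord j)
    else (nat_of_ord i == nat_of_ord j)%:R.

(* A_n for n >= 1 (n = m+1):
   A_{m+1} = [A_{0,1}^{-1} (+) I] ... [A_{m-1,m}^{-1} (+) I] A_{m,m+1}^{-1}.
   For n = 0 (not used by the paper) we put the identity. *)
Definition An (n : nat) : 'M[int]_(n.+1) :=
  match n return 'M[int]_(n.+1) with
  | 0 => 1%:M
  | m.+1 => (\prod_(k < m) Dblk m.+1 k) *m invmx (Akk m)
  end.

Definition emb (n : nat) (v : 'cV[int]_(n.+1)) : nat -> int :=
  fun i => if (i < n.+1)%N then v (inord i) 0 else 0.

Definition finsupp (b : nat -> int) : Prop :=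
  exists N, forall i, (N <= i)%N -> b i = 0.

Definition Phi (n : nat) (v : 'cV[int]_(n.+1)) : nat -> int := emb (An n *m v).

Fixpoint lift_by (d : nat) : forall n, 'cV[int]_(n.+1) -> 'cV[int]_((d + n).+1) :=
  match d return forall n, 'cV[int]_(n.+1) -> 'cV[int]_((d + n).+1) with
  | 0 => fun n v => v
  | d'.+1 => fun n v => Aup (d' + n) *m lift_by d' v
  end.

(* Equality in G of the classes of (n,v) and (m,w). *)
Definition limeq (n : nat) (v : 'cV[int]_(n.+1)) (m : nat) (w : 'cV[int]_(m.+1)) : Prop :=
  exists d e, (d + n = e + m)%N /\ emb (lift_by d v) =1 emb (lift_by e w).

(* The induced map G -> Z^(oo) on the class of (n,v), computed at level n+1 >= 1. *)
Definition Philim (n : nat) (v : 'cV[int]_(n.+1)) : nat -> int := Phi (Aup n *m v).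

Definition ubin (n : nat) : 'cV[int]_(n.+1) := \col_i ('C(n, i))%:Z.

Definition e1 : nat -> int := fun i => if i == 0%N then 1 else 0.

Definition nonnegv (n : nat) (v : 'cV[int]_(n.+1)) : Prop := forall i, 0 <= v i 0.

(* P_n^+ (0-indexed: b l = beta_{l+1}). *)
Definition Pplus (n : nat) (b : nat -> int) : Prop :=
  (forall i, (n.+1 <= i)%N -> b i = 0) /\
  (forall k, (k <= n)%N -> 0 <= \sum_(l < k.+1) ('C(n - l, k - l))%:Z * b l).

(* Main.v *)
Require Import Defs.
From HB Require Import structures.
From mathcomp Require Import all_boot all_order all_algebra.
From mathcomp Require Import zify.
Import Order.TTheory GRing.Theory Num.Theory.
Local Open Scope ring_scope.
Set Implicit Arguments. Unset Strict Implicit. Unset Printing Implicit Defensive.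

Definition Emx (N : nat) : 'M[int]_(N.+2, N.+1) :=
  \matrix_(i, j) (nat_of_ord i == nat_of_ord j)%:R.

Definition Bn (m : nat) : 'M[int]_(m.+2) := \prod_(k < m.+1) Dblk m.+1 k.

Definition Mm (n : nat) : 'M[int]_(n.+1) :=
  \matrix_(k, l) if (nat_of_ord l <= nat_of_ord k)%N then ('C(n - l, k - l))%:Z else 0.

Lemma sum_eq1 N (f : 'I_N.+1 -> int) (i : nat) :
  \sum_(l < N.+1) (i == l)%:R * f l = if (i < N.+1)%N then f (inord i) else 0.
Proof.
case: ifP => hi.
  rewrite (bigD1 (inord i)) //= big1 => [|l hl].
    by rewrite inordK // eqxx mul1r addr0.
  case: eqP => [e|]; last by rewrite mul0r.
  by move: hl; rewrite -val_eqE /= inordK // e eqxx.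
apply: big1 => l _; case: eqP => [e|]; last by rewrite mul0r.
by move: hi; rewrite e ltn_ord.
Qed.

Lemma sum_eq1' N (f : 'I_N.+1 -> int) (i : nat) :
  \sum_(l < N.+1) (l == i :> nat)%:R * f l = if (i < N.+1)%N then f (inord i) else 0.
Proof. by rewrite -sum_eq1; apply: eq_bigr => l _; rewrite eq_sym. Qed.

Lemma sum_aup N (f : 'I_N.+1 -> int) (i : nat) :
  \sum_(l < N.+1) ((i == l) || (i == l.+1))%:R * f l =
  (if (i < N.+1)%N then f (inord i) else 0) +
  (if (0 < i)%N && (i.-1 < N.+1)%N then f (inord i.-1) else 0).
Proof.
rewrite -sum_eq1.
have -> : \sum_(l < N.+1) ((i == l) || (i == l.+1))%:R * f l =
   \sum_(l < N.+1) ((i == l)%:R * f l + ((0 < i)%N && (i.-1 == l))%:R * f l).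
  apply: eq_bigr => l _; rewrite -mulrDl; congr (_ * _).
  have hb : forall a b : bool, ~~ (a && b) -> ((a || b)%:R : int) = a%:R + b%:R by case; case.
  case: i => [|i] /=.
    rewrite hb; last by case: (0%N == l).
    by congr (_ + _); case: (0%N =P l.+1).
  rewrite eqSS hb //; apply/negP => /andP [/eqP e /eqP e']; rewrite -e' in e; lia.
rewrite big_split /=; congr (_ + _).
case: (posnP i) => [->|ip] /=.
  by apply: big1 => l _; rewrite mul0r.
exact: sum_eq1.
Qed.

Lemma mulEmx_r N m (A : 'M[int]_(m, N.+2)) i j : (A *m Emx N) i j = A i (widen_ord (leqnSn _) j).
Proof.
rewrite mxE; under eq_bigr do rewrite mxE mulrC.
rewrite sum_eq1' (leqW (ltn_ord j)); congr (A i _); apply: val_inj; rewrite /= inordK //.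
exact: leqW.
Qed.

Lemma mulEmx_l N m (A : 'M[int]_(N.+1, m)) (i : 'I_N.+2) j :
  (Emx N *m A) i j = if (i < N.+1)%N then A (inord i) j else 0.
Proof.
rewrite mxE; under eq_bigr do rewrite mxE.
by rewrite sum_eq1.
Qed.

Lemma embE N (x : 'cV[int]_(N.+1)) : emb (Emx N *m x) =1 emb x.
Proof.
move=> i; rewrite /emb; case: ifP => hi.
  by rewrite mulEmx_l inordK.
by case: ifP => // h; move: hi; rewrite ltnS ltnW.
Qed.

Lemma emb_inj N (x y : 'cV[int]_(N.+1)) : emb x =1 emb y -> x = y.
Proof.
move=> h; apply/matrixP => i j; rewrite ord1; have := h i.
by rewrite /emb ltn_ord !inord_val.
Qed.

Lemma embD N (x y : 'cV[int]_(N.+1)) i : emb (x + y) i = emb x i + emb y i.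
Proof. by rewrite /emb; case: ifP => _; rewrite ?mxE ?addr0. Qed.

Lemma AupE N : Aup N = Akk N *m Emx N.
Proof. by apply/matrixP => i j; rewrite mulEmx_r !mxE. Qed.

Lemma Akk_unit N : Akk N \in unitmx.
Proof.
rewrite unitmxE det_trig.
  rewrite big1 ?unitr1 // => i _; by rewrite mxE eqxx.
apply/forallP => i; apply/forallP => j; apply/implyP => lt; rewrite mxE.
case: (nat_of_ord i =P nat_of_ord j) => [e|_]; first by move: lt; rewrite e ltnn.
case: (nat_of_ord i =P (nat_of_ord j).+1) => [e|_] //; by move: lt; rewrite e ltnNge leqnSn.
Qed.

Lemma Dblk_E N k : (k < N)%N -> Dblk N.+1 k *m Emx N = Emx N *m Dblk N k.
Proof.
move=> kN; apply/matrixP => i j; rewrite mulEmx_r mulEmx_l !mxE /=.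
case: (ltnP i N.+1) => hi; first by rewrite inordK.
have -> : nat_of_ord i = N.+1 by move: (ltn_ord i) hi; lia.
have -> : (N.+1 < k.+2)%N = false by lia.
by case: eqP => // e; move: (ltn_ord j); rewrite -e ltnn.
Qed.

Lemma prodD_E N K : (K <= N)%N ->
  (\prod_(k < K) Dblk N.+1 k) *m Emx N = Emx N *m \prod_(k < K) Dblk N k.
Proof.
elim: K => [|K IH] KN.
  by rewrite !big_ord0 -idmxE mul1mx mulmx1.
rewrite !big_ord_recr /= -!mulmxE; move: IH; rewrite -!mulmxE => IH.
by rewrite -mulmxA Dblk_E // mulmxA IH ?mulmxA // ltnW.
Qed.

Lemma AnB m : An m.+1 = Bn m.
Proof.
rewrite /Bn big_ord_recr /= -mulmxE; congr (_ *m _).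
by apply/matrixP => i j; rewrite !mxE !ltn_ord /= !inord_val.
Qed.

Lemma Bn_Aup m : Bn m.+1 *m Aup m.+1 = Emx m.+1 *m Bn m.
Proof.
rewrite -AnB /= AupE mulmxA -(mulmxA _ (invmx _)) mulVmx ?Akk_unit // mulmx1.
rewrite prodD_E // /Bn; congr (_ *m _).
Qed.

Definition el N : 'cV[int]_(N.+1) := delta_mx ord_max 0.

Lemma Akk_el N : Akk N *m el N.+1 = el N.+1.
Proof.
rewrite /el -colE; apply/matrixP => i j; rewrite !mxE ord1 eqxx andbT /=.
case: (nat_of_ord i =P N.+1) => e.
  by have -> : i == ord_max by apply/eqP/val_inj.
have -> : (i == ord_max) = false by apply/negP => /eqP ei; apply: e; rewrite ei.
case: (nat_of_ord i =P N.+2) => // e2; move: (ltn_ord i); lia.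
Qed.

Lemma Dblk_el N k : (k.+1 < N)%N -> Dblk N k *m el N = el N.
Proof.
move=> kN; rewrite /el -colE; apply/matrixP => i j; rewrite !mxE ord1 /=.
have -> : (N < k.+2)%N = false by lia.
rewrite andbF andbT; congr (_ %:R).
Qed.

Lemma prodD_el N K : (K < N)%N -> (\prod_(k < K) Dblk N k) *m el N = el N.
Proof.
elim: K => [|K IH] KN.
  by rewrite !big_ord0 -idmxE mul1mx.
rewrite !big_ord_recr /= -mulmxE -mulmxA Dblk_el // IH //; lia.
Qed.

Lemma invAkk_el N : invmx (Akk N) *m el N.+1 = el N.+1.
Proof.
by rewrite -{1}Akk_el mulmxA mulVmx ?Akk_unit // mul1mx.
Qed.

Lemma Bn_el m : Bn m.+1 *m el m.+2 = el m.+2.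
Proof. by rewrite -AnB /= -mulmxA invAkk_el prodD_el. Qed.

Lemma pascal_step (N i j : nat) : (i < N.+2)%N -> (j < N.+1)%N ->
  ((if (j <= i)%N then ('C(N.+1 - j, i - j))%:Z else 0) =
   (if (i < N.+1)%N then (if (j <= i)%N then ('C(N - j, i - j))%:Z else 0) else 0) +
   (if (0 < i)%N then (if (j <= i.-1)%N then ('C(N - j, i.-1 - j))%:Z else 0) else 0)).
Proof.
move=> hi hj.
case: (ltnP i j) => hij.
  have h1 : (j <= i)%N = false by lia.
  have h2 : (j <= i.-1)%N = false by lia.
  by rewrite h2 !if_same addr0.
case: (posnP i) => [i0|ip].
  have j0 : j = 0%N by lia.
  by rewrite i0 j0 /= !bin0 addr0.
case: (ltnP i N.+1) => hiN.
  case: (eqVneq i j) => [eij|nij].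
    by rewrite eij ifF ?binn ?subnn ?bin0 ?addr0 //; lia.
  rewrite ifT; last by lia.
  have -> : (N.+1 - j = (N - j).+1)%N by lia.
  have -> : (i - j = (i.-1 - j).+1)%N by lia.
  by rewrite binS PoszD.
have -> : i = N.+1 by lia.
rewrite /= ifT; last by lia.
rewrite add0r; have -> : (N.+1 - j = (N - j).+1)%N by lia.
by rewrite !binn.
Qed.

Lemma Mm_E N : Mm N.+1 *m Emx N = Aup N *m Mm N.
Proof.
apply/matrixP => i j; rewrite mulEmx_r [RHS]mxE.
under eq_bigr do rewrite [Aup N _ _]mxE.
rewrite (sum_aup (fun l => Mm N l j)) !mxE /=.
rewrite (pascal_step (ltn_ord i) (ltn_ord j)).
case: (ltnP i N.+1) => hi; first rewrite inordK //.
  case: (posnP i) => // ip /=.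
  have hN : (i.-1 < N.+1)%N by lia.
  by rewrite hN inordK.
case: (posnP i) => [i0|ip] /=; first by move: hi; rewrite i0.
have hN : (i.-1 < N.+1)%N by move: (ltn_ord i); lia.
by rewrite hN inordK.
Qed.

Lemma Mm_el N : Mm N *m el N = el N.
Proof.
rewrite /el -colE; apply/matrixP => i j; rewrite !mxE ord1 eqxx andbT /=.
case: (eqVneq i ord_max) => [->|ne] /=; first by rewrite leqnn subnn bin0.
rewrite ifF //; apply/negbTE; rewrite -ltnNge.
have : nat_of_ord i != N by apply: contra ne => /eqP e; apply/eqP/val_inj.
move: (ltn_ord i); lia.
Qed.

Lemma id_from N (X : 'M[int]_(N.+2)) :
  X *m Emx N = Emx N -> X *m el N.+1 = el N.+1 -> X = 1%:M.
Proof.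
move=> H1 H2; apply/matrixP => i j.
case: (ltnP j N.+1) => hj.
  have := congr1 (fun M : 'M[int]_(N.+2, N.+1) => M i (Ordinal hj)) H1; rewrite mulEmx_r !mxE /=.
  by have -> : widen_ord (leqnSn N.+1) (Ordinal hj) = j by apply: val_inj.
have ej : j = ord_max by apply: val_inj => /=; move: (ltn_ord j); lia.
have := congr1 (fun M : 'cV[int]_(N.+2) => M i 0) H2; rewrite /el -colE !mxE /= ej eqxx andbT.
by [].
Qed.

Lemma Mm1 : Mm 1 = Akk 0.
Proof.
apply/matrixP => i j; rewrite !mxE.
by case: i => [[|[|i]] hi] //; case: j => [[|[|j]] hj].
Qed.

Lemma Bn_Mm m : Bn m *m Mm m.+1 = 1%:M.
Proof.
elim: m => [|m IH].
  by rewrite -AnB /= big_ord0 -idmxE mul1mx Mm1 mulVmx ?Akk_unit.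
apply: id_from.
  by rewrite -mulmxA Mm_E mulmxA Bn_Aup -mulmxA IH mulmx1.
by rewrite -mulmxA Mm_el Bn_el.
Qed.

Lemma Mm_Bn m : Mm m.+1 *m Bn m = 1%:M.
Proof. exact: mulmx1C (Bn_Mm m). Qed.

Lemma PhilimE n (v : 'cV[int]_(n.+1)) : Philim v =1 emb (Bn n *m (Aup n *m v)).
Proof. by move=> i; rewrite /Philim /Phi AnB. Qed.

Lemma compat m (v : 'cV[int]_(m.+2)) : emb (Bn m.+1 *m (Aup m.+1 *m v)) =1 emb (Bn m *m v).
Proof. by move=> i; rewrite mulmxA Bn_Aup -mulmxA embE. Qed.

Lemma PhilimS n (v : 'cV[int]_(n.+2)) : Philim v =1 emb (Bn n *m v).
Proof. by move=> i; rewrite PhilimE compat. Qed.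

Lemma Philim_lift d n (v : 'cV[int]_(n.+1)) : Philim (lift_by d v) =1 Philim v.
Proof.
elim: d => [|d IH] //= i.
rewrite -IH (PhilimS (n := d + n)) PhilimE //.
Qed.

Lemma Philim_eqlev N N' (x : 'cV[int]_(N.+1)) (y : 'cV[int]_(N'.+1)) :
  N = N' -> emb x =1 emb y -> Philim x =1 Philim y.
Proof. by move=> e; case: N' / e y => y /emb_inj ->. Qed.

Lemma Philim_inj N N' (x : 'cV[int]_(N.+1)) (y : 'cV[int]_(N'.+1)) :
  N = N' -> Philim x =1 Philim y -> emb x =1 emb y.
Proof.
move=> e; case: N' / e y => y h.
have h1 : Bn N *m (Aup N *m x) = Bn N *m (Aup N *m y).
  by apply: emb_inj => i; rewrite -!PhilimE.
have h2 : Aup N *m x = Aup N *m y.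
  by rewrite -[Aup N *m x]mul1mx -[Aup N *m y]mul1mx -(Mm_Bn N) -!mulmxA h1.
have h3 : Emx N *m x = Emx N *m y.
  move: h2; rewrite AupE -!mulmxA => h2.
  by rewrite -[Emx N *m x]mul1mx -[Emx N *m y]mul1mx -(mulVmx (Akk_unit N)) -!mulmxA h2.
by move=> i; rewrite -[emb x i]embE h3 embE.
Qed.

Lemma Mcoord N (b : 'cV[int]_(N.+1)) k : (k <= N)%N ->
  \sum_(l < k.+1) ('C(N - l, k - l))%:Z * emb b l = (Mm N *m b) (inord k) 0.
Proof.
move=> kN; rewrite (big_ord_widen N.+1 (fun l => ('C(N - l, k - l))%:Z * emb b l)) //.
rewrite big_mkcond mxE; apply: eq_bigr => l _; rewrite mxE inordK // ltnS.
by case: ifP => _; rewrite ?mul0r // /emb ltn_ord inord_val.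
Qed.

Lemma Aup_ubin n : Aup n *m ubin n = ubin n.+1.
Proof.
apply/matrixP => i j; rewrite ord1 !mxE.
under eq_bigr do rewrite [Aup n _ _]mxE [ubin n _ _]mxE.
rewrite (sum_aup (fun l : 'I_n.+1 => ('C(n, l))%:Z)).
have hf : forall k, (if (k < n.+1)%N then ('C(n, (inord k : 'I_n.+1)))%:Z else 0) = 'C(n, k).
  move=> k; case: ifP => hk; first by rewrite inordK.
  by rewrite bin_small //; lia.
rewrite hf.
case: i => [[|i] hi] /=; first by rewrite !bin0 addr0.
by rewrite hf binS PoszD.
Qed.

Lemma ubin_Mm n : ubin n.+1 = Mm n.+1 *m delta_mx 0 0.
Proof.
rewrite -colE; apply/matrixP => i j; rewrite ord1 !mxE /=.
by rewrite !subn0.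
Qed.

Lemma Philim_ubin n : Philim (ubin n) =1 e1.
Proof.
move=> i; rewrite PhilimE Aup_ubin ubin_Mm mulmxA Bn_Mm mul1mx /emb /e1.
case: ifP => hi; rewrite ?mxE ?inordK //=; last first.
  by case: eqP => // e; move: hi; rewrite e.
by rewrite eqxx andbT -val_eqE /= inordK //; case: (i == 0%N).
Qed.

Lemma emb_col N (b : nat -> int) : (forall i, (N.+1 <= i)%N -> b i = 0) ->
  emb (\col_(i < N.+1) b i) =1 b.
Proof.
move=> hz i; rewrite /emb; case: ifP => hi; first by rewrite mxE inordK.
by rewrite hz //; lia.
Qed.

Theorem mainTheorem11 :
  (forall n, (1 <= n)%N -> forall v : 'cV[int]_(n.+1), Phi (Aup n *m v) =1 Phi v)
  /\ (forall n (v : 'cV[int]_(n.+1)) m (w : 'cV[int]_(m.+1)),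
        limeq v w -> Philim v =1 Philim w)
  /\ (forall n (v w : 'cV[int]_(n.+1)),
        Philim (v + w) =1 (fun i => Philim v i + Philim w i))
  /\ (forall n (v : 'cV[int]_(n.+1)), finsupp (Philim v))
  /\ (forall n (v : 'cV[int]_(n.+1)) m (w : 'cV[int]_(m.+1)),
        Philim v =1 Philim w -> limeq v w)
  /\ (forall b : nat -> int, finsupp b ->
        exists n (v : 'cV[int]_(n.+1)), Philim v =1 b)
  /\ (forall n, Philim (ubin n) =1 e1)
  /\ (forall b : nat -> int,
        (exists n (v : 'cV[int]_(n.+1)), nonnegv v /\ Philim v =1 b)
        <-> (exists n, (1 <= n)%N /\ Pplus n b)).
Proof.
split.
  case=> [//|m] _ v i; by rewrite /Phi !AnB compat.
split.
  move=> n v m w [d [e [hde heq]]] i.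
  rewrite -(Philim_lift d v i) -(Philim_lift e w i); exact: (Philim_eqlev hde heq).
split.
  by move=> n v w i; rewrite /Philim /Phi !mulmxDr embD.
split.
  move=> n v; exists n.+2 => i hi; rewrite /Philim /Phi /emb ifF //; lia.
split.
  move=> n v m w h; exists m, n; split; first by rewrite addnC.
  apply: (@Philim_inj (m + n) (n + m) _ _ (addnC _ _)) => i.
  by rewrite !Philim_lift.
split.
  move=> b [N hN]; exists N.+1, (Mm N.+1 *m \col_(i < N.+2) b i) => i.
  rewrite PhilimS mulmxA Bn_Mm mul1mx emb_col // => j hj; apply: hN; lia.
split; first exact: Philim_ubin.
move=> b; split.
  move=> [n [v [hv hb]]]; exists n.+1; split => //; split.
    by move=> i hi; rewrite -hb PhilimE /emb ifF //; lia.
  move=> k hk; under eq_bigr do rewrite -hb PhilimE.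
  rewrite Mcoord // mulmxA Mm_Bn mul1mx mxE.
  apply: sumr_ge0 => l _; rewrite mxE; exact: mulr_ge0 (ler0n _ _) (hv l).
move=> [n [n1 [hz hs]]]; case: n n1 hz hs => [//|N] _ hz hs.
exists N.+1, (Mm N.+1 *m \col_(i < N.+2) b i); split.
  move=> i; have := hs i (ltn_ord i).
  by under eq_bigr do rewrite -(emb_col hz); rewrite Mcoord ?inord_val // -ltnS.
by move=> i; rewrite PhilimS mulmxA Bn_Mm mul1mx emb_col.
Qed.
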